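(* Let $\mathcal{S}$ be a state space and let $\mathsf{M}^{(1)},\mathsf{M}^{(2)}$ be dichotomic measurements on $\mathcal{S}$. If $\bar P(\mathsf{M}^{(1)},\mathsf{M}^{(2)})<1$, then $\mathsf{M}^{(1)}$ and $\mathsf{M}^{(2)}$ are not maximally incompatible.
   Context: General probabilistic theory setting: a state space $\mathcal{S}$ is a compact convex subset of a finite-dimensional real vector space, embedded as a base of a closed generating proper cone in a vector space $V$, with unit effect $u$. Effects are linear functionals $e$ on $V$ with $0\le e\le1$ on $\mathcal{S}$; $\|f\|=\max_{s\in\mathcal{S}}|f(s)|$. A measurement with finite outcome set $\Omega$ is a map $x\mapsto\mathsf{M}_x$ to effects with $\sum_x\mathsf{M}_x=u$; a dichotomic measurement has outcome set $\{+,-\}$. For dichotomic $\mathsf{M}^{(1)},\mathsf{M}^{(2)}$, $\bar P(\mathsf{M}^{(1)},\mathsf{M}^{(2)})=\frac18\sum_{x,y\in\{+,-\}}\|\mathsf{M}^{(1)}_x+\mathsf{M}^{(2)}_y\|$. A measurement $\mathsf{T}$ is trivial if $\mathsf{T}_x=p_xu$ for a probability distribution $(p_x)$. Two measurements with outcome sets $\Omega_1,\Omega_2$ are compatible if there is a measurement $\mathsf{J}$ on $\Omega_1\times\Omega_2$ whose marginals are the two measurements. The degree of incompatibility $d(\mathsf{M}^{(1)},\mathsf{M}^{(2)})$ is the maximal $\lambda\in[0,1]$ such that $\lambda\mathsf{M}^{(1)}+(1-\lambda)\mathsf{T}^{(1)}$ and $\lambda\mathsf{M}^{(2)}+(1-\lambda)\mathsf{T}^{(2)}$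 are compatible for some trivial measurements $\mathsf{T}^{(1)},\mathsf{T}^{(2)}$; it always satisfies $d\ge\frac12$, and the measurements are maximally incompatible if $d(\mathsf{M}^{(1)},\mathsf{M}^{(2)})=\frac12$. *)

(* Defs.v *)
From HB Require Import structures.
From mathcomp Require Import all_boot all_order all_algebra.
From mathcomp Require Import all_classical all_reals all_analysis.
Set Implicit Arguments. Unset Strict Implicit. Unset Printing Implicit Defensive.
Import Order.TTheory GRing.Theory Num.Theory.
Import numFieldNormedType.Exports.
Local Open Scope classical_set_scope.
Local Open Scope ring_scope.

(* The ambient finite-dimensional real vector space V is 'rV[R]_n.
   Linear functionals on V are represented by vectors f : 'rV[R]_n acting
   by the standard pairing  f(v) = \sum_i f_i v_i  (every linear functional
   on R^n is of this form). *)
Definition pair {R : realType} {n : nat} (f v : 'rV[R]_n) : R :=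
  \sum_(i < n) f ord0 i * v ord0 i.

Definition gen_cone {R : realType} {n : nat} (S : set 'rV[R]_n) : set 'rV[R]_n :=
  [set v | exists t : R, exists s, 0 <= t /\ S s /\ v = t *: s].

(* S is a state space with unit effect u: S is a nonempty compact convex set
   which is a base of the closed, generating, proper (pointed) cone it
   generates, the base being cut out by the unit effect u (u = 1 on S). *)
Definition state_space {R : realType} {n : nat} (S : set 'rV[R]_n) (u : 'rV[R]_n) :
  Prop :=
  (S !=set0) /\
  compact S /\
  (forall x y (t : R), S x -> S y -> 0 <= t <= 1 -> S (t *: x + (1 - t) *: y)) /\
  (forall s, S s -> pair u s = 1) /\
  closed (gen_cone S) /\
  (forall v, gen_cone S v -> gen_cone S (- v) -> v = 0) /\
  (forall v, exists a b, gen_cone S a /\ gen_cone S b /\ v = a - b).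

Definition effect {R : realType} {n : nat} (S : set 'rV[R]_n) (e : 'rV[R]_n) : Prop :=
  forall s, S s -> 0 <= pair e s <= 1.

(* sup-norm on S: ||f|| = max_{s in S} |f(s)|  (a max since S is compact). *)
Definition fnorm {R : realType} {n : nat} (S : set 'rV[R]_n) (f : 'rV[R]_n) : R :=
  sup [set `|pair f s| | s in S].

Definition measurement {R : realType} {n : nat} {O : finType}
  (S : set 'rV[R]_n) (u : 'rV[R]_n) (M : O -> 'rV[R]_n) : Prop :=
  (forall x, effect S (M x)) /\ \sum_(x : O) M x = u.

(* Dichotomic measurements: outcome set {+,-} encoded as bool (true = +). *)

Definition Pbar {R : realType} {n : nat} (S : set 'rV[R]_n)
  (M1 M2 : bool -> 'rV[R]_n) : R :=
  8^-1 * \sum_(x : bool) \sum_(y : bool) fnorm S (M1 x + M2 y).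

Definition trivial_meas {R : realType} {n : nat} {O : finType}
  (u : 'rV[R]_n) (T : O -> 'rV[R]_n) : Prop :=
  exists p : O -> R, (forall x, 0 <= p x) /\ \sum_(x : O) p x = 1 /\
                     (forall x, T x = p x *: u).

Definition compatible {R : realType} {n : nat} {O1 O2 : finType}
  (S : set 'rV[R]_n) (u : 'rV[R]_n) (M1 : O1 -> 'rV[R]_n) (M2 : O2 -> 'rV[R]_n) : Prop :=
  exists J : O1 * O2 -> 'rV[R]_n,
    measurement S u J /\
    (forall x, \sum_(y : O2) J (x, y) = M1 x) /\
    (forall y, \sum_(x : O1) J (x, y) = M2 y).

(* Degree of incompatibility: the maximal (= supremum, attained) lambda in [0,1]
   such that the noisy versions are compatible for some trivial measurements. *)
Definition deg_incomp {R : realType} {n : nat} {O1 O2 : finType}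
  (S : set 'rV[R]_n) (u : 'rV[R]_n) (M1 : O1 -> 'rV[R]_n) (M2 : O2 -> 'rV[R]_n) : R :=
  sup [set l : R | 0 <= l <= 1 /\
        exists (T1 : O1 -> 'rV[R]_n) (T2 : O2 -> 'rV[R]_n),
          trivial_meas u T1 /\ trivial_meas u T2 /\
          compatible S u (fun x => l *: M1 x + (1 - l) *: T1 x)
                         (fun y => l *: M2 y + (1 - l) *: T2 y)].

Definition max_incompatible {R : realType} {n : nat} {O1 O2 : finType}
  (S : set 'rV[R]_n) (u : 'rV[R]_n) (M1 : O1 -> 'rV[R]_n) (M2 : O2 -> 'rV[R]_n) : Prop :=
  deg_incomp S u M1 M2 = 2^-1.

(* Main.v *)
Require Import Defs.
From HB Require Import structures.
From mathcomp Require Import all_boot all_order all_algebra.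
From mathcomp Require Import all_classical all_reals all_analysis.
From mathcomp Require Import ring lra.
Import Order.TTheory GRing.Theory Num.Theory.
Local Open Scope classical_set_scope.
Local Open Scope ring_scope.

Section H.
Variables (R : realType) (n : nat).

Lemma pairD (f g v : 'rV[R]_n) : pair (f + g) v = pair f v + pair g v.
Proof. by rewrite /pair -big_split /=; apply: eq_bigr => i _; rewrite mxE mulrDl. Qed.

Lemma pairZ (c : R) (f v : 'rV[R]_n) : pair (c *: f) v = c * pair f v.
Proof. by rewrite /pair mulr_sumr; apply: eq_bigr => i _; rewrite mxE mulrA. Qed.

Lemma pairN (f v : 'rV[R]_n) : pair (- f) v = - pair f v.
Proof. by rewrite -scaleN1r pairZ mulN1r. Qed.

Lemma pairB (f g v : 'rV[R]_n) : pair (f - g) v = pair f v - pair g v.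
Proof. by rewrite pairD pairN. Qed.

Lemma le_fnorm (S : set 'rV[R]_n) (f : 'rV[R]_n) (b : R) s :
  (forall s, S s -> `|pair f s| <= b) -> S s -> `|pair f s| <= fnorm S f.
Proof.
move=> hb Ss; apply: sup_upper_bound; last by exists s.
split; first by exists `|pair f s|, s.
by exists b => _ [t St <-]; apply: hb.
Qed.

Lemma meas_neg (S : set 'rV[R]_n) u (M : bool -> 'rV[R]_n) x :
  measurement S u M -> M (~~ x) = u - M x.
Proof.
case=> _; rewrite big_bool => <-; case: x => /=; by rewrite ?addrK ?addKr // addrC addrK.
Qed.

Lemma bool_neq {x y : bool} : x != y -> x = ~~ y.
Proof. by case: x; case: y. Qed.

Lemma sum_if (V : zmodType) (y0 : bool) (X Y : V) :
  \sum_(b : bool) (if b == y0 then X else Y) = X + Y.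
Proof. by rewrite big_bool; case: y0 => //=; rewrite addrC. Qed.

Lemma key (S : set 'rV[R]_n) u (M1 M2 : bool -> 'rV[R]_n) x0 y0 s0 :
  S s0 -> (forall s, S s -> pair u s = 1) ->
  measurement S u M1 -> measurement S u M2 ->
  fnorm S (M1 x0 + M2 y0) < 2 ->
  exists l, 2^-1 < l /\ (0 <= l <= 1 /\
        exists (T1 : bool -> 'rV[R]_n) (T2 : bool -> 'rV[R]_n),
          trivial_meas u T1 /\ trivial_meas u T2 /\
          compatible S u (fun x => l *: M1 x + (1 - l) *: T1 x)
                         (fun y => l *: M2 y + (1 - l) *: T2 y)).
Proof.
move=> Ss0 hu hM1 hM2 hN.
set N := fnorm S (M1 x0 + M2 y0) in hN.
have ef1 := hM1.1 x0; have ef2 := hM2.1 y0.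
have hab : forall s, S s -> pair (M1 x0) s + pair (M2 y0) s <= N.
  move=> s Ss; rewrite -pairD; apply: le_trans (@le_fnorm S _ 2 _ _ Ss); first exact: ler_norm.
  move=> t St; rewrite pairD; have := ef1 t St; have := ef2 t St.
  move=> /andP[? ?] /andP[? ?]; rewrite ger0_norm; lra.
have N0 : 0 <= N.
  have := hab _ Ss0; have := ef1 _ Ss0; have := ef2 _ Ss0.
  move=> /andP[? ?] /andP[? ?]; lra.
set t := (2 - N) / 8.
have t0 : 0 < t by rewrite /t; lra.
have t1 : t <= 4^-1 by rewrite /t; lra.
set l := 2^-1 + t.
set mu := (1 - l) / 2.
set A := M1 x0. set B := M2 y0.
set G := mu *: (A + B).
set A' := l *: A + mu *: u. set B' := l *: B + mu *: u.
pose J (p : bool * bool) := if p.1 == x0 then (if p.2 == y0 then G else A' - G)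
   else (if p.2 == y0 then B' - G else u - A' - B' + G).
exists l; split; first by rewrite /l; lra.
split; first by rewrite /l; lra.
pose T := fun _ : bool => 2^-1 *: u.
have trT : trivial_meas u T.
  exists (fun _ => 2^-1); split; first by move=> _; lra.
  by split; [rewrite big_bool /=; lra | by []].
exists T, T; split => //; split => //.
exists J; split; [split|split].
{ move=> p s Ss.
  have := ef1 _ Ss; have := ef2 _ Ss; have := hab _ Ss; have := hu _ Ss.
  rewrite /J; case: (p.1 == x0); case: (p.2 == y0);
  rewrite /G /A' /B' ?(pairD, pairB, pairN, pairZ) -/A -/B;
  move=> hus hs /andP[? ?] /andP[? ?]; rewrite ?hus /mu /l.
  all: have h1 : (4^-1 + 3 / 2 * t) * (pair A s + pair B s) <= (4^-1 + 3 / 2 * t) * N by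
    apply: ler_wpM2l => //; lra.
  all: have hN' : N = 2 - 8 * t by rewrite /t; lra.
  all: rewrite hN' in h1.
  all: apply/andP; split; nra. }
{ rewrite (eq_bigr (fun p => J (p.1,p.2))); last by case.
  rewrite -(pair_bigA _ (fun a b => J (a,b))) /J /=.
  rewrite (eq_bigr (fun a => if a == x0 then G + (A' - G) else (B' - G) + (u - A' - B' + G))); last by move=> a _; case: (a == x0); rewrite sum_if.
  rewrite sum_if; apply/rowP => i; rewrite /G /A' /B' /T /mu /A /B !mxE; by field. }
{ move=> x; rewrite /J /=.
  case: (eqVneq x x0) => [->|hx]; rewrite ?eqxx ?(negbTE hx) sum_if.
    by apply/rowP => i; rewrite /G /A' /B' /T /mu /A /B !mxE; by field.
  rewrite (bool_neq hx).
  rewrite (@meas_neg _ _ _ _ hM1). apply/rowP => i; rewrite /G /A' /B' /T /mu /A /B !mxE; by field. }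
{ move=> y; rewrite /J /=.
  case: (eqVneq y y0) => [->|hy]; rewrite ?eqxx ?(negbTE hy).
    rewrite sum_if; apply/rowP => i; rewrite /G /A' /B' /T /mu /A /B !mxE; by field.
  rewrite sum_if (bool_neq hy).
  rewrite (@meas_neg _ _ _ _ hM2). apply/rowP => i; rewrite /G /A' /B' /T /mu /A /B !mxE; by field. }
Qed.


Lemma exists_small (S : set 'rV[R]_n) (M1 M2 : bool -> 'rV[R]_n) :
  Pbar S M1 M2 < 1 -> exists x0 y0, fnorm S (M1 x0 + M2 y0) < 2.
Proof.
rewrite /Pbar !big_bool /= => hP.
case: (ltrP (fnorm S (M1 true + M2 true)) 2) => h1; first by exists true, true.
case: (ltrP (fnorm S (M1 true + M2 false)) 2) => h2; first by exists true, false.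
case: (ltrP (fnorm S (M1 false + M2 true)) 2) => h3; first by exists false, true.
case: (ltrP (fnorm S (M1 false + M2 false)) 2) => h4; first by exists false, false.
exfalso; move: hP; apply/negP; rewrite -leNgt; lra.
Qed.

End H.

Theorem corollary2 (R : realType) (n : nat) (S : set 'rV[R]_n) (u : 'rV[R]_n)
  (M1 M2 : bool -> 'rV[R]_n) :
  state_space S u ->
  measurement S u M1 -> measurement S u M2 ->
  Pbar S M1 M2 < 1 ->
  ~ max_incompatible S u M1 M2.
Proof.
move=> [[s0 Ss0] [_ [_ [hu _]]]] hM1 hM2 hP.
have [x0 [y0 hN]] := @exists_small _ _ _ _ _ hP.
have [l [hl hL]] := @key _ _ _ _ _ _ _ _ _ Ss0 hu hM1 hM2 hN.
rewrite /max_incompatible /deg_incomp => E.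
have : l <= 2^-1.
  rewrite -E; apply: sup_upper_bound => //; split; first by exists l.
  by exists 1 => y [/andP[_ ?] _].
lra.
Qed.
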